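(* Let $(W,M)$ be a reachable Kripke structure over an $\mathsf{HFOL}$ signature $\Delta$. Let $(W,N)$ be a Kripke structure obtained from $(W,M)$ by (a) replacing unreachable elements of flexible sorts by some new elements, (b) preserving the interpretation of function and relation symbols on the elements inherited from $(W,M)$, and (c) interpreting function symbols arbitrarily on the new arguments. Then $(W,M)\equiv(W,N)$, i.e. $(W,M)\models\varphi$ iff $(W,N)\models\varphi$ for all $\Delta$-sentences $\varphi$.
   Context: Hybrid first-order logic with rigid symbols ($\mathsf{HFOL}$). A signature is $\Delta=(\Sigma^{\mathtt n},\Sigma^{\mathtt r}\subseteq\Sigma)$ with $\Sigma=(S,F,P)$ a many-sorted first-order signature, $\Sigma^{\mathtt r}\subseteq\Sigma$ the rigid symbols, and $\Sigma^{\mathtt n}$ single-sorted (sort $\mathtt n$) with constants $F^{\mathtt n}$ (nominals) and unary/binary relations (modalities); sorts of $S\setminus S^{\mathtt r}$ are flexible. A Kripke structure $(W,M)$: a $\Sigma^{\mathtt n}$-structure $W$ with nonempty world set $|W|$ and $\Sigma$-structures $M_w$ all with the same reduct to $\Sigma^{\mathtt r}$. Hybrid terms use $\Sigma$-symbols and symbols $@_k\sigma$ ($k$ nominal, $\sigma$ flexible; $@_k x=x$ for rigid $x$), with $M_{w,(@_k\sigma)(t)}=M_{W_k,\sigma}(M_{w,t})$; rigid hybrid terms are built only from $@_k\sigma$-symbols and have sort $@_k s$. Sentences: atoms $k$, $\varrho$, $t_1=t_2$, $\varpi(t)$ (hybrid terms), closed under $@_k$, $\neg$, finite $\vee$, $\downarrow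 z$ (store, $z$ nominal variable), $\exists X$ ($X$ variables of rigid sorts or of sort $\mathtt n$), $\langle\lambda\rangle$ (binary modality), with the standard local Kripke semantics; $(W,M)\models\varphi$ (global) means $\varphi$ holds at all worlds. An element $e\in M_{w,s}$ is reachable if $w=W_k$ and $e=M_{w,t}$ for some nominal $k$ and rigid hybrid term $t$ of sort $@_k s$. $(W,M)$ is reachable if every world is the denotation of a nominal and every element of a rigid sort is the denotation of a rigid hybrid term. *)

(* Defs.v *)
From Stdlib Require Import List PeanoNat.
Import ListNotations.

Set Implicit Arguments.

Record hsig := {
  Srt : Type;
  Fun : Type;
  Pred : Type;
  fdom : Fun -> list Srt;
  fcod : Fun -> Srt;
  pdom : Pred -> list Srt;
  rigidS : Srt -> bool;
  rigidF : Fun -> bool;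
  rigidP : Pred -> bool;
  (* Sigma^r is a subsignature: rigid symbols only involve rigid sorts *)
  rigidF_sorts : forall f, rigidF f = true ->
      rigidS (fcod f) = true /\ (forall s, In s (fdom f) -> rigidS s = true);
  rigidP_sorts : forall p, rigidP p = true ->
      (forall s, In s (pdom p) -> rigidS s = true);
  (* Sigma^n : single sorted, nominals, unary relations, binary modalities *)
  Nom : Type;
  PropSym : Type;
  Modal : Type
}.

Section HFOL.
Variable D : hsig.

Inductive nterm : Type :=
| nom (k : Nom D)
| nvar (z : nat).

(* hybrid sorts: (None, s) is the sort s (evaluated at the current
   world); (Some k, s) is the sort @_k s.  @_k s = s for rigid s. *)
Definition hsort_t := (option nterm * Srt D)%type.
Definition hsort (k : nterm) (s : Srt D) : hsort_t :=
  if rigidS D s then (None, s) else (Some k, s).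
Definition bsort (s : Srt D) : hsort_t := (None, s).

(* hybrid terms (untyped syntax; sorting is given by [tty]) *)
Inductive hterm : Type :=
| tvar (x : nat)                              (* variable of a rigid sort *)
| tapp (f : Fun D) (ts : list hterm)
| tat (k : nterm) (f : Fun D) (ts : list hterm).

Inductive sen : Type :=
| Snom (k : nterm)
| Sprop (r : PropSym D)
| Seq (t1 t2 : hterm)
| Spred (p : Pred D) (ts : list hterm)
| Sat (k : nterm) (phi : sen)
| Sneg (phi : sen)
| Sor (phis : list sen)
| Sstore (z : nat) (phi : sen)
| SexN (z : nat) (phi : sen)
| SexV (x : nat) (s : Srt D) (phi : sen)
| Sdia (l : Modal D) (phi : sen).

Fixpoint lookup (G : list (nat * Srt D)) (x : nat) : option (Srt D) :=
  match G with
  | [] => None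
  | (y, s) :: G' => if Nat.eqb x y then Some s else lookup G' x
  end.

Definition nwf (Z : list nat) (k : nterm) : Prop :=
  match k with nom _ => True | nvar z => In z Z end.

(* G : rigid-sorted variables in scope, Z : nominal variables in scope *)
Inductive tty (G : list (nat * Srt D)) (Z : list nat) : hterm -> hsort_t -> Prop :=
| tty_var : forall x s, lookup G x = Some s -> tty G Z (tvar x) (bsort s)
| tty_app : forall f ts,
    Forall2 (tty G Z) ts (map bsort (fdom D f)) ->
    tty G Z (tapp f ts) (bsort (fcod D f))
| tty_at : forall k f ts,
    rigidF D f = false -> nwf Z k ->
    Forall2 (tty G Z) ts (map (hsort k) (fdom D f)) ->
    tty G Z (tat k f ts) (hsort k (fcod D f)).

Fixpoint wf (G : list (nat * Srt D)) (Z : list nat) (phi : sen) : Prop :=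
  match phi with
  | Snom k => nwf Z k
  | Sprop _ => True
  | Seq t1 t2 => exists hs, tty G Z t1 hs /\ tty G Z t2 hs
  | Spred p ts => Forall2 (tty G Z) ts (map bsort (pdom D p))
  | Sat k psi => nwf Z k /\ wf G Z psi
  | Sneg psi => wf G Z psi
  | Sor l => (fix wfl (l : list sen) : Prop :=
                match l with [] => True | psi :: l' => wf G Z psi /\ wfl l' end) l
  | Sstore z psi => wf G (z :: Z) psi
  | SexN z psi => wf G (z :: Z) psi
  | SexV x s psi => rigidS D s = true /\ wf ((x, s) :: G) Z psi
  | Sdia _ psi => wf G Z psi
  end.

Definition sentence (phi : sen) : Prop := wf [] [] phi.

(* closed rigid hybrid terms: built only from @_k sigma symbols
   (k a nominal; a rigid sigma counts as @_k sigma = sigma) *)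
Fixpoint rterm (t : hterm) : Prop :=
  match t with
  | tvar _ => False
  | tapp f ts => rigidF D f = true /\
      (fix rl (l : list hterm) : Prop :=
         match l with [] => True | u :: l' => rterm u /\ rl l' end) ts
  | tat k f ts => (exists k0, k = nom k0) /\
      (fix rl (l : list hterm) : Prop :=
         match l with [] => True | u :: l' => rterm u /\ rl l' end) ts
  end.

Record frame (Wt : Type) := {
  wnom : Nom D -> Wt;
  wprop : PropSym D -> Wt -> Prop;
  wrel : Modal D -> Wt -> Wt -> Prop;
  w_ne : inhabited Wt
}.

(* Elements of all
   carriers live in a universe type V; M_{w,s} = {v | dom w s v}.
   [vdef] is an arbitrary point of the universe (used only as a dummy
   valuation for closed sentences). *)
Record model (Wt V : Type) := {
  vdef : V;
  dom : Wt -> Srt D -> V -> Prop;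
  fn : Wt -> Fun D -> list V -> V;
  pr : Wt -> Pred D -> list V -> Prop;
  fn_typed : forall w f vs, Forall2 (dom w) (fdom D f) vs ->
      dom w (fcod D f) (fn w f vs);
  (* all M_w have the same reduct to Sigma^r *)
  dom_rigid : forall w w' s v, rigidS D s = true -> (dom w s v <-> dom w' s v);
  fn_rigid : forall w w' f vs, rigidF D f = true ->
      Forall2 (dom w) (fdom D f) vs -> fn w f vs = fn w' f vs;
  pr_rigid : forall w w' p vs, rigidP D p = true ->
      Forall2 (dom w) (pdom D p) vs -> (pr w p vs <-> pr w' p vs)
}.

Section Sem.
Variables (Wt V : Type) (Fr : frame Wt) (M : model Wt V).

Definition upd {A : Type} (r : nat -> A) (x : nat) (a : A) : nat -> A :=
  fun y => if Nat.eqb y x then a else r y.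

Definition nval (nu : nat -> Wt) (k : nterm) : Wt :=
  match k with nom k0 => wnom Fr k0 | nvar z => nu z end.

Fixpoint eval (nu : nat -> Wt) (rho : nat -> V) (w : Wt) (t : hterm) : V :=
  match t with
  | tvar x => rho x
  | tapp f ts => fn M w f (map (eval nu rho w) ts)
  | tat k f ts => fn M (nval nu k) f (map (eval nu rho w) ts)
  end.

Fixpoint sat (nu : nat -> Wt) (rho : nat -> V) (w : Wt) (phi : sen) : Prop :=
  match phi with
  | Snom k => nval nu k = w
  | Sprop r => wprop Fr r w
  | Seq t1 t2 => eval nu rho w t1 = eval nu rho w t2
  | Spred p ts => pr M w p (map (eval nu rho w) ts)
  | Sat k psi => sat nu rho (nval nu k) psi
  | Sneg psi => ~ sat nu rho w psi
  | Sor l => (fix satl (l : list sen) : Prop :=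
                match l with [] => False | psi :: l' => sat nu rho w psi \/ satl l' end) l
  | Sstore z psi => sat (upd nu z w) rho w psi
  | SexN z psi => exists w', sat (upd nu z w') rho w psi
  | SexV x s psi => exists v, dom M w s v /\ sat nu (upd rho x v) w psi
  | Sdia l psi => exists w', wrel Fr l w w' /\ sat nu rho w' psi
  end.

Definition gsat (phi : sen) : Prop :=
  forall w : Wt, sat (fun _ => w) (fun _ => vdef M) w phi.

Definition reach (w : Wt) (s : Srt D) (e : V) : Prop :=
  dom M w s e /\
  exists (k : Nom D) (t : hterm),
    wnom Fr k = w /\ rterm t /\ tty [] [] t (hsort (nom k) s) /\
    eval (fun _ => w) (fun _ => vdef M) w t = e.

Definition reachable : Prop :=
  (forall w : Wt, exists k, wnom Fr k = w) /\
  (forall w s e, rigidS D s = true -> dom M w s e -> reach w s e).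
End Sem.

(* (W,N) is obtained from (W,M) by replacing the unreachable elements of
   flexible sorts by new elements (the inherited elements being
   identified via the injection iota), preserving the interpretation of
   function and relation symbols on inherited elements, and interpreting
   function symbols arbitrarily on new arguments. *)
Definition obtained (Wt VM VN : Type) (Fr : frame Wt)
    (M : model Wt VM) (N : model Wt VN) (iota : VM -> VN) : Prop :=
  (forall e1 e2, iota e1 = iota e2 -> e1 = e2) /\
  (forall w s e, reach Fr M w s e -> dom N w s (iota e)) /\
  (forall w s e, dom M w s e -> dom N w s (iota e) -> reach Fr M w s e) /\
  (forall w s y, rigidS D s = true -> dom N w s y ->
       exists e, dom M w s e /\ y = iota e) /\
  (forall w f es, Forall2 (reach Fr M w) (fdom D f) es ->
       fn N w f (map iota es) = iota (fn M w f es)) /\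
  (forall w p es, Forall2 (reach Fr M w) (pdom D p) es ->
       (pr N w p (map iota es) <-> pr M w p es)).

End HFOL.

(* Main.v *)
Require Import Defs.
From Stdlib Require Import List PeanoNat ClassicalEpsilon.
Import ListNotations.
Unset Implicit Arguments.
Arguments tvar {D} x.
Arguments nom {D} k.
Arguments nvar {D} z.
Arguments tapp {D} f ts.
Arguments tat {D} k f ts.
Arguments bsort {D} s.
Arguments Sprop {D} r.

Lemma F2_combine A B (P : A -> Prop) (R Q : A -> B -> Prop) ts ss :
  Forall P ts -> Forall2 R ts ss -> (forall t s, P t -> R t s -> Q t s) -> Forall2 Q ts ss.
Proof. intros HP HR H; induction HR; inversion HP; subst; constructor; auto. Qed.

Lemma F2_map_r A B C (R : A -> C -> Prop) (g : B -> C) l l' :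
  Forall2 R l (map g l') <-> Forall2 (fun a b => R a (g b)) l l'.
Proof.
  split.
  - revert l; induction l' as [|b l' IH]; intros l H; inversion H; subst; constructor; auto.
  - intro H; induction H; constructor; auto.
Qed.

Lemma F2_flip_map A B C (Q : B -> C -> Prop) (h : A -> C) ts ss :
  Forall2 (fun t s => Q s (h t)) ts ss -> Forall2 Q ss (map h ts).
Proof. intro H; induction H; constructor; auto. Qed.

Lemma F2_impl_in A B (R Q : A -> B -> Prop) ts ss :
  Forall2 R ts ss -> (forall t s, In s ss -> R t s -> Q t s) -> Forall2 Q ts ss.
Proof. intros H; induction H; intros HQ; constructor; auto.
  apply HQ; simpl; auto. apply IHForall2; intros; apply HQ; simpl; auto. Qed.

Lemma F2_map_l A B C (R : C -> B -> Prop) (h : A -> C) l l' :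
  Forall2 (fun a b => R (h a) b) l l' -> Forall2 R (map h l) l'.
Proof. intro H; induction H; constructor; auto. Qed.

Section Ind.
Variable D : hsig.
Fixpoint hterm_ind' (P : hterm D -> Prop) (Hv : forall x, P (tvar x))
  (Ha : forall f ts, Forall P ts -> P (tapp f ts))
  (Ht : forall k f ts, Forall P ts -> P (tat k f ts)) (t : hterm D) : P t :=
  match t with
  | tvar x => Hv x
  | tapp f ts => Ha f ts ((fix go (l : list (hterm D)) : Forall P l :=
       match l with [] => Forall_nil _ | u :: l' => Forall_cons _ (hterm_ind' P Hv Ha Ht u) (go l') end) ts)
  | tat k f ts => Ht k f ts ((fix go (l : list (hterm D)) : Forall P l :=
       match l with [] => Forall_nil _ | u :: l' => Forall_cons _ (hterm_ind' P Hv Ha Ht u) (go l') end) ts)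
  end.

Fixpoint sen_ind' (P : sen D -> Prop)
  (H1 : forall k, P (Snom k)) (H2 : forall r, P (Sprop r))
  (H3 : forall t1 t2, P (Seq t1 t2)) (H4 : forall p ts, P (Spred p ts))
  (H5 : forall k phi, P phi -> P (Sat k phi)) (H6 : forall phi, P phi -> P (Sneg phi))
  (H7 : forall l, Forall P l -> P (Sor l)) (H8 : forall z phi, P phi -> P (Sstore z phi))
  (H9 : forall z phi, P phi -> P (SexN z phi)) (H10 : forall x s phi, P phi -> P (SexV x s phi))
  (H11 : forall l phi, P phi -> P (Sdia l phi)) (phi : sen D) : P phi :=
  let F := sen_ind' P H1 H2 H3 H4 H5 H6 H7 H8 H9 H10 H11 in
  match phi with
  | Snom k => H1 k | Sprop r => H2 r | Seq t1 t2 => H3 t1 t2 | Spred p ts => H4 p ts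
  | Sat k psi => H5 k psi (F psi) | Sneg psi => H6 psi (F psi)
  | Sor l => H7 l ((fix go (l : list (sen D)) : Forall P l :=
       match l with [] => Forall_nil _ | u :: l' => Forall_cons _ (F u) (go l') end) l)
  | Sstore z psi => H8 z psi (F psi) | SexN z psi => H9 z psi (F psi)
  | SexV x s psi => H10 x s psi (F psi) | Sdia l psi => H11 l psi (F psi)
  end.

Lemma rterm_app f (ts : list (hterm D)) : rterm (tapp f ts) <-> rigidF D f = true /\ Forall (@rterm D) ts.
Proof.
  induction ts as [|u ts IH]; simpl in *.
  - intuition.
  - split.
    + intros [H1 [H2 H3]]. split; auto. constructor; auto. apply IH; auto.
    + intros [H1 H2]; inversion H2; subst. split; auto. split; auto. apply IH; auto.
Qed.

Lemma rterm_at k f (ts : list (hterm D)) : rterm (tat k f ts) <-> (exists k0, k = nom k0) /\ Forall (@rterm D) ts.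
Proof.
  induction ts as [|u ts IH]; simpl in *.
  - intuition.
  - split.
    + intros [H1 [H2 H3]]. split; auto. constructor; auto. apply IH; auto.
    + intros [H1 H2]; inversion H2; subst. split; auto. split; auto. apply IH; auto.
Qed.

Lemma wf_or G Z (l : list (sen D)) : wf G Z (Sor l) <-> Forall (wf G Z) l.
Proof.
  induction l as [|u l IH]; simpl in *.
  - intuition.
  - split.
    + intros [H1 H2]. constructor; auto. apply IH; auto.
    + intros H; inversion H; subst. split; auto. apply IH; auto.
Qed.

Lemma sat_or Wt V (Fr : frame D Wt) (M : model D Wt V) nu rho w (l : list (sen D)) :
  sat Fr M nu rho w (Sor l) <-> Exists (sat Fr M nu rho w) l.
Proof.
  induction l as [|u l IH]; simpl in *.
  - split; [tauto| intro H; inversion H].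
  - split.
    + intros [H|H]. constructor; auto. apply Exists_cons_tl, IH; auto.
    + intros H; inversion H; subst; auto. right; apply IH; auto.
Qed.

Definition rn (k0 k k1 : nterm D) : nterm D :=
  if excluded_middle_informative (k1 = k0) then k else k1.

Fixpoint ren (k0 k : nterm D) (t : hterm D) : hterm D :=
  match t with
  | tvar x => tvar x
  | tapp f ts => tapp f (map (ren k0 k) ts)
  | tat k1 f ts => tat (rn k0 k k1) f (map (ren k0 k) ts)
  end.

Definition rsort (k0 k : nterm D) (hs : hsort_t D) : hsort_t D :=
  (option_map (rn k0 k) (fst hs), snd hs).

Lemma rsort_hsort k0 k k1 s : rsort k0 k (hsort k1 s) = hsort (rn k0 k k1) s.
Proof. unfold rsort, hsort; destruct (rigidS D s); reflexivity. Qed.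

Lemma rsort_bsort k0 k s : rsort k0 k (bsort s) = bsort s.
Proof. reflexivity. Qed.

Lemma ren_tty G Z k0 k (Hk : nwf Z k) t : forall hs, tty G Z t hs -> tty G Z (ren k0 k t) (rsort k0 k hs).
Proof.
  induction t as [x|f ts IH|k1 f ts IH] using hterm_ind'; intros hs H; inversion H as [? ? ?|? ? HF|? ? ? ? ? HF]; subst; simpl.
  all: idtac.
  - constructor; auto.
  - rewrite rsort_bsort. constructor. apply F2_map_r. apply (proj1 (F2_map_r _ _ _ _ bsort _ _)) in HF.
    apply F2_map_l.
    apply F2_combine with (1 := IH) (2 := HF). intros t s Ht Hts.
    rewrite <- (rsort_bsort k0 k). apply Ht; auto.
  - rewrite rsort_hsort. constructor; auto.
    + unfold rn; destruct excluded_middle_informative; auto.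
    + apply F2_map_r. apply (proj1 (F2_map_r _ _ _ _ (hsort k1) _ _)) in HF.
      apply F2_map_l.
      apply F2_combine with (1 := IH) (2 := HF). intros t s Ht Hts.
      rewrite <- rsort_hsort. apply Ht; auto.
Qed.

Lemma ren_eval Wt V (Fr : frame D Wt) (M : model D Wt V) nu rho w k0 k
  (Hk : nval Fr nu k0 = nval Fr nu k) t :
  eval Fr M nu rho w (ren k0 k t) = eval Fr M nu rho w t.
Proof.
  induction t as [x|f ts IH|k1 f ts IH] using hterm_ind'; simpl; auto.
  - rewrite map_map. f_equal. apply map_ext_Forall. exact IH.
  - rewrite map_map. f_equal.
    + unfold rn; destruct excluded_middle_informative; subst; auto.
    + apply map_ext_Forall. exact IH.
Qed.

Lemma ren_rterm k0 k0' t : rterm t -> rterm (ren (nom k0) (nom k0') t).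
Proof.
  induction t as [x|f ts IH|k1 f ts IH] using hterm_ind'; simpl ren.
  - auto.
  - intro H; apply rterm_app in H; apply rterm_app; destruct H as [H1 H2]; split; auto.
    apply Forall_map. eapply Forall_impl with (P := fun u => rterm u /\ _).
    2: { apply Forall_and; [exact H2| exact IH]. } simpl. intros a [Ha Hb]; auto.
  - intro H; apply rterm_at in H; apply rterm_at; destruct H as [[k2 H1] H2]; split.
    + unfold rn; destruct excluded_middle_informative; eauto.
    + apply Forall_map. eapply Forall_impl with (P := fun u => rterm u /\ _).
      2: { apply Forall_and; [exact H2| exact IH]. } simpl. intros a [Ha Hb]; auto.
Qed.

Lemma rn_self k0 k : rn k0 k k0 = k.
Proof. unfold rn; destruct excluded_middle_informative; congruence. Qed.

Section Main.
Variables (Wt VM VN : Type) (Fr : frame D Wt) (M : model D Wt VM) (N : model D Wt VN)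
  (iota : VM -> VN).

Lemma reach_dom w s e : reach Fr M w s e -> dom M w s e.
Proof. intros [H _]; exact H. Qed.

Lemma collect (HR : reachable Fr M) w k (Hk : wnom Fr k = w) ss es :
  Forall2 (reach Fr M w) ss es ->
  exists ts, Forall2 (fun t s => rterm t /\ tty [] [] t (hsort (nom k) s)) ts ss /\
    map (eval Fr M (fun _ => w) (fun _ => vdef M) w) ts = es.
Proof.
  intro H; induction H as [|s e ss es Hr _ [ts [IH1 IH2]]].
  - exists []; split; auto.
  - destruct Hr as [_ [k1 [t1 [Hk1 [Hr [Ht He]]]]]].
    exists (ren (nom k1) (nom k) t1 :: ts); split.
    + constructor; auto. split. apply ren_rterm; auto.
      replace (hsort (nom k) s) with (rsort (nom k1) (nom k) (hsort (nom k1) s)) by (rewrite rsort_hsort, rn_self; auto). apply ren_tty; simpl; auto.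
    + simpl. rewrite ren_eval; [|simpl; congruence]. congruence.
Qed.

Lemma reach_fn (HR : reachable Fr M) w f es :
  Forall2 (reach Fr M w) (fdom D f) es -> reach Fr M w (fcod D f) (fn M w f es).
Proof.
  intro H. split.
  { apply fn_typed. eapply Forall2_impl; [|exact H]. apply reach_dom. }
  destruct (proj1 HR w) as [k Hk].
  destruct (collect HR w k Hk _ _ H) as [ts [H1 H2]].
  exists k. destruct (rigidF D f) eqn:Ef.
  - destruct (rigidF_sorts D f Ef) as [Hc Hd].
    exists (tapp f ts). split; auto. split.
    { apply rterm_app; split; auto. clear -H1. induction H1; constructor; tauto. }
    split.
    + unfold hsort; rewrite Hc. constructor. apply F2_map_r.
      apply F2_impl_in with (1 := H1). intros t s Hin [_ Ht].
      unfold hsort in Ht; rewrite (Hd s Hin) in Ht; exact Ht.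
    + simpl. rewrite H2; auto.
  - exists (tat (nom k) f ts). split; auto. split.
    { apply rterm_at; split; eauto. clear -H1. induction H1; constructor; tauto. }
    split.
    + constructor; simpl; auto. apply F2_map_r.
      eapply Forall2_impl; [|exact H1]. simpl; tauto.
    + simpl. rewrite H2, Hk; auto.
Qed.

Lemma reach_rigid (HR : reachable Fr M) w w' s e :
  rigidS D s = true -> reach Fr M w s e -> reach Fr M w' s e.
Proof.
  intros Hs H. apply (proj2 HR); auto. apply (dom_rigid M w); auto. apply reach_dom; auto.
Qed.

Definition wt nu w (hs : hsort_t D) : Wt :=
  match fst hs with None => w | Some k => nval Fr nu k end.

Lemma term_main (HR : reachable Fr M) (HO : obtained Fr M N iota) G Z
  (HG : forall x s, lookup D G x = Some s -> rigidS D s = true)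
  nu rho rhoN w
  (Hrho : forall x s, lookup D G x = Some s -> rhoN x = iota (rho x) /\ forall w', dom M w' s (rho x))
  t : forall hs, tty G Z t hs ->
  reach Fr M (wt nu w hs) (snd hs) (eval Fr M nu rho w t) /\
  eval Fr N nu rhoN w t = iota (eval Fr M nu rho w t).
Proof.
  destruct HO as [Hinj [Hkeep [_ [_ [Hfn Hpr]]]]].
  induction t as [x|f ts IH|k f ts IH] using hterm_ind'; intros hs H;
    inversion H as [? ? Hl|? ? HF|? ? ? Hrf Hnw HF]; subst; simpl.
  - destruct (Hrho x s Hl) as [E Hd]. split; auto.
    apply (proj2 HR); auto. eapply HG; eauto.
  - apply (proj1 (F2_map_r _ _ _ _ bsort _ _)) in HF.
    assert (Hc : Forall2 (fun t s => reach Fr M w s (eval Fr M nu rho w t) /\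
       eval Fr N nu rhoN w t = iota (eval Fr M nu rho w t)) ts (fdom D f)).
    { apply F2_combine with (1 := IH) (2 := HF). intros t s Ht Hts. apply Ht in Hts. exact Hts. }
    assert (Hr : Forall2 (reach Fr M w) (fdom D f) (map (eval Fr M nu rho w) ts)).
    { apply F2_flip_map. eapply Forall2_impl; [|exact Hc]. simpl; tauto. }
    assert (Hm : map (eval Fr N nu rhoN w) ts = map iota (map (eval Fr M nu rho w) ts)).
    { rewrite map_map. clear -Hc. induction Hc; simpl; f_equal; tauto. }
    split.
    + unfold wt; simpl. apply reach_fn; auto.
    + rewrite Hm. apply Hfn; auto.
  - apply (proj1 (F2_map_r _ _ _ _ (hsort k) _ _)) in HF.
    assert (Hc : Forall2 (fun t s => reach Fr M (nval Fr nu k) s (eval Fr M nu rho w t) /\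
       eval Fr N nu rhoN w t = iota (eval Fr M nu rho w t)) ts (fdom D f)).
    { apply F2_combine with (1 := IH) (2 := HF). intros t s Ht Hts. apply Ht in Hts.
      destruct Hts as [Hts1 Hts2]; split; auto. unfold wt, hsort in Hts1.
      unfold hsort in Hts1. destruct (rigidS D s) eqn:Es; simpl in Hts1; auto.
      eapply reach_rigid; eauto. }
    assert (Hr : Forall2 (reach Fr M (nval Fr nu k)) (fdom D f) (map (eval Fr M nu rho w) ts)).
    { apply F2_flip_map. eapply Forall2_impl; [|exact Hc]. simpl; tauto. }
    assert (Hm : map (eval Fr N nu rhoN w) ts = map iota (map (eval Fr M nu rho w) ts)).
    { rewrite map_map. clear -Hc. induction Hc; simpl; f_equal; tauto. }
    split.
    + pose proof (reach_fn HR _ _ _ Hr) as HH.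
      unfold wt, hsort. destruct (rigidS D (fcod D f)) eqn:Es; simpl; auto.
      eapply reach_rigid; eauto.
    + rewrite Hm. apply Hfn; auto.
Qed.

Lemma lookup_upd G x s y s' : lookup D ((x, s) :: G) y = Some s' ->
  (y = x /\ s' = s) \/ (y <> x /\ lookup D G y = Some s').
Proof. simpl. destruct (Nat.eqb y x) eqn:E. apply Nat.eqb_eq in E. left; split; congruence.
  apply Nat.eqb_neq in E. right; auto. Qed.

Lemma sen_main (HR : reachable Fr M) (HO : obtained Fr M N iota) phi : forall G Z,
  wf G Z phi -> (forall x s, lookup D G x = Some s -> rigidS D s = true) ->
  forall nu rho rhoN w,
  (forall x s, lookup D G x = Some s -> rhoN x = iota (rho x) /\ forall w', dom M w' s (rho x)) ->
  (sat Fr M nu rho w phi <-> sat Fr N nu rhoN w phi).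
Proof.
  pose proof HO as HO'.
  destruct HO' as [Hinj [Hkeep [_ [Hnew [Hfn Hpr]]]]].
  induction phi as [k|r|t1 t2|p ts|k phi IH|phi IH|l IH|z phi IH|z phi IH|x s phi IH|l phi IH]
    using sen_ind'; intros G Z Hwf HG nu rho rhoN w Hrho; simpl in *.
  - tauto.
  - tauto.
  - destruct Hwf as [hs [H1 H2]].
    destruct (term_main HR HO G Z HG nu rho rhoN w Hrho t1 hs H1) as [_ E1].
    destruct (term_main HR HO G Z HG nu rho rhoN w Hrho t2 hs H2) as [_ E2].
    rewrite E1, E2. split; intro E; [congruence| apply Hinj; auto].
  - apply (proj1 (F2_map_r _ _ _ _ bsort _ _)) in Hwf.
    assert (Hc : Forall2 (fun t s => reach Fr M w s (eval Fr M nu rho w t) /\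
       eval Fr N nu rhoN w t = iota (eval Fr M nu rho w t)) ts (pdom D p)).
    { eapply Forall2_impl; [|exact Hwf]. intros t s Ht.
      exact (term_main HR HO G Z HG nu rho rhoN w Hrho t _ Ht). }
    assert (Hr : Forall2 (reach Fr M w) (pdom D p) (map (eval Fr M nu rho w) ts)).
    { apply F2_flip_map. eapply Forall2_impl; [|exact Hc]. simpl; tauto. }
    assert (Hm : map (eval Fr N nu rhoN w) ts = map iota (map (eval Fr M nu rho w) ts)).
    { rewrite map_map. clear -Hc. induction Hc; simpl; f_equal; tauto. }
    rewrite Hm. symmetry. apply Hpr; auto.
  - destruct Hwf; eapply IH; eauto.
  - rewrite (IH G Z Hwf HG nu rho rhoN w Hrho). tauto.
  - pose proof (proj1 (wf_or G Z l) Hwf) as Hl.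
    pose proof (sat_or Wt VM Fr M nu rho w l) as E1; pose proof (sat_or Wt VN Fr N nu rhoN w l) as E2; simpl in E1, E2; rewrite E1, E2.
    assert (Hall : Forall (fun psi => sat Fr M nu rho w psi <-> sat Fr N nu rhoN w psi) l).
    { pose proof (Forall_and IH Hl) as Hb. eapply Forall_impl; [|exact Hb].
      simpl. intros a [Ha Hb']. eapply Ha; eauto. }
    clear -Hall. induction Hall; split; intro H'; inversion H'; subst.
    + constructor; tauto.
    + apply Exists_cons_tl; tauto.
    + constructor; tauto.
    + apply Exists_cons_tl; tauto.
  - eapply IH; eauto.
  - split; intros [w' Hw']; exists w'; eapply IH; eauto.
  - destruct Hwf as [Hs Hwf].
    assert (HG' : forall y s', lookup D ((x, s) :: G) y = Some s' -> rigidS D s' = true).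
    { intros y s' Hy; destruct (lookup_upd G x s y s' Hy) as [[_ ->]|[_ Hy']]; eauto. }
    assert (Hrho' : forall v, dom M w s v -> forall y s', lookup D ((x, s) :: G) y = Some s' ->
       upd rhoN x (iota v) y = iota (upd rho x v y) /\ forall w', dom M w' s' (upd rho x v y)).
    { intros v Hv y s' Hy; unfold upd.
      destruct (lookup_upd G x s y s' Hy) as [[-> ->]|[Hne Hy']].
      - rewrite Nat.eqb_refl. split; auto. intro w'. apply (dom_rigid M w); auto.
      - apply Nat.eqb_neq in Hne; rewrite Hne. apply Hrho; auto. }
    split.
    + intros [v [Hv Hs']]. exists (iota v); split.
      * apply Hkeep. apply (proj2 HR); auto.
      * eapply (IH _ Z Hwf HG' nu (upd rho x v)); eauto.
    + intros [y [Hy Hs']]. destruct (Hnew w s y Hs Hy) as [v [Hv ->]]. exists v; split; auto.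
      eapply (IH _ Z Hwf HG' nu (upd rho x v)); eauto.
  - split; intros [w' [Hw1 Hw2]]; exists w'; split; auto; eapply IH; eauto.
Qed.
End Main.
End Ind.

Theorem lemma3p1 (D : hsig) (Wt VM VN : Type) (Fr : frame D Wt)
  (M : model D Wt VM) (N : model D Wt VN) (iota : VM -> VN) :
  reachable Fr M ->
  obtained Fr M N iota ->
  forall phi : sen D, sentence phi -> (gsat Fr M phi <-> gsat Fr N phi).
Proof.
  intros HR HO phi Hphi. unfold gsat.
  assert (H : forall w, sat Fr M (fun _ => w) (fun _ => vdef M) w phi <->
                        sat Fr N (fun _ => w) (fun _ => vdef N) w phi).
  { intro w. apply (sen_main D Wt VM VN Fr M N iota HR HO phi [] [] Hphi).
    - simpl; discriminate.
    - simpl; discriminate. }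
  split; intros H' w; apply H; auto.
Qed.
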